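(* Let $A$ be a real $m\times m$ matrix, $f$ in the range of $A$, $y$ the minimal-norm solution of $Ay=f$ (so $y\perp\mathcal{N}(A)$), and $q\in(0,1)$. Define $u_1=0$ and $u_{n+1}=q^nT_{q^n}^{-1}u_n+T_{q^n}^{-1}A^*f$ for $n\ge1$. Then $\lim_{n\to\infty}\|u_n-y\|=0$.
   Context: $A^*$ is the transpose of $A$, $T:=A^*A$, $T_a:=T+aI$ for $a>0$; $\mathcal{N}(A)=\{u:Au=0\}$; $\|\cdot\|$ is the Euclidean norm. *)

(* Defs.v *)
(* real m x m matrices as functions nat -> nat -> R
   (only entries with indices < m are meaningful), vectors as nat -> R. *)
From Stdlib Require Import Reals Lra Lia.
Open Scope R_scope.

Definition Vec := nat -> R.
Definition Mat := nat -> nat -> R.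

Fixpoint sumR (n : nat) (f : nat -> R) : R :=
  match n with
  | O => 0
  | S k => sumR k f + f k
  end.

Definition matvec (m : nat) (A : Mat) (x : Vec) : Vec :=
  fun i => sumR m (fun j => A i j * x j).

Definition matmul (m : nat) (A B : Mat) : Mat :=
  fun i j => sumR m (fun k => A i k * B k j).

Definition transp (A : Mat) : Mat := fun i j => A j i.

Definition idM : Mat := fun i j => if Nat.eqb i j then 1 else 0.

Definition Tmat (m : nat) (A : Mat) : Mat := matmul m (transp A) A.
Definition Ta (m : nat) (A : Mat) (a : R) : Mat :=
  fun i j => Tmat m A i j + a * idM i j.

Definition is_inverse (m : nat) (M B : Mat) : Prop :=
  forall i j, (i < m)%nat -> (j < m)%nat ->
    matmul m M B i j = idM i j /\ matmul m B M i j = idM i j.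

Definition vsub (x y : Vec) : Vec := fun i => x i - y i.

Definition norm (m : nat) (x : Vec) : R := sqrt (sumR m (fun i => x i * x i)).

Definition veq (m : nat) (x y : Vec) : Prop := forall i, (i < m)%nat -> x i = y i.

Definition in_range (m : nat) (A : Mat) (f : Vec) : Prop :=
  exists x, veq m (matvec m A x) f.

Definition min_norm_solution (m : nat) (A : Mat) (f y : Vec) : Prop :=
  veq m (matvec m A y) f /\
  forall z, veq m (matvec m A z) f -> norm m y <= norm m z.

(* Main.v *)
Require Import Defs.
From Stdlib Require Import Reals Lra Lia Psatz Classical.
Open Scope R_scope.

Lemma sumR_ext n f g : (forall j, (j<n)%nat -> f j = g j) -> sumR n f = sumR n g.
Proof. induction n; intros H; simpl; auto. rewrite IHn, (H n); auto; intros; apply H; lia. Qed.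
Lemma sumR_plus n f g : sumR n (fun j => f j + g j) = sumR n f + sumR n g.
Proof. induction n; simpl; [lra|rewrite IHn; lra]. Qed.
Lemma sumR_scal n c f : sumR n (fun j => c * f j) = c * sumR n f.
Proof. induction n; simpl; [lra|rewrite IHn; lra]. Qed.
Lemma sumR_minus n f g : sumR n (fun j => f j - g j) = sumR n f - sumR n g.
Proof. induction n; simpl; [lra|rewrite IHn; lra]. Qed.
Lemma sumR_0 n f : (forall j, (j<n)%nat -> f j = 0) -> sumR n f = 0.
Proof. intros H. rewrite (sumR_ext n f (fun _ => 0)) by auto. clear H. induction n; simpl; lra. Qed.
Lemma sumR_swap n k F : sumR n (fun i => sumR k (fun j => F i j)) = sumR k (fun j => sumR n (fun i => F i j)).
Proof. induction n; simpl. - symmetry; apply sumR_0; auto. - rewrite IHn, <- sumR_plus. reflexivity. Qed.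
Lemma sumR_shift n f : sumR (S n) f = f 0%nat + sumR n (fun j => f (S j)).
Proof. induction n. - simpl; lra. - change (sumR (S (S n)) f) with (sumR (S n) f + f (S n)). rewrite IHn. simpl; lra. Qed.
Lemma sumR_nonneg n f : (forall j, (j<n)%nat -> 0 <= f j) -> 0 <= sumR n f.
Proof. induction n; intros H; simpl; [lra|]. assert (0 <= f n) by (apply H; lia). assert (0 <= sumR n f) by (apply IHn; intros; apply H; lia). lra. Qed.
Lemma sumR_le n f g : (forall j, (j<n)%nat -> f j <= g j) -> sumR n f <= sumR n g.
Proof. intros H. assert (0 <= sumR n (fun j => g j - f j)) by (apply sumR_nonneg; intros j Hj; specialize (H j Hj); lra).
 rewrite sumR_minus in H0; lra. Qed.
Lemma sumR_sq_zero n x : sumR n (fun i => x i * x i) = 0 -> forall i, (i<n)%nat -> x i = 0.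
Proof. induction n; intros H i Hi; [lia|]. simpl in H.
 assert (0 <= sumR n (fun i => x i * x i)) by (apply sumR_nonneg; intros; nra).
 assert (x n * x n = 0) by nra. assert (sumR n (fun i => x i * x i) = 0) by nra.
 destruct (Nat.eq_dec i n). subst; nra. apply IHn; auto; lia. Qed.

Lemma sumR_idM_out m i x : (m <= i)%nat -> sumR m (fun j => idM i j * x j) = 0.
Proof. intros H; apply sumR_0; intros j Hj. unfold idM. destruct (Nat.eqb_spec i j); [lia|lra]. Qed.
Lemma sumR_idM m i x : (i < m)%nat -> sumR m (fun j => idM i j * x j) = x i.
Proof. induction m; intros H; [lia|]. simpl. destruct (Nat.eq_dec i m).
 - subst. rewrite sumR_idM_out by lia. unfold idM; rewrite Nat.eqb_refl; lra.
 - rewrite IHm by lia. unfold idM. destruct (Nat.eqb_spec i m); [lia|lra]. Qed.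

Lemma matvec_ext m M x z i : (forall l, (l<m)%nat -> x l = z l) -> matvec m M x i = matvec m M z i.
Proof. intros H; unfold matvec; apply sumR_ext; intros; rewrite H; auto. Qed.
Lemma matvec_mext m M M' x i : (forall j, (j<m)%nat -> M i j = M' i j) -> matvec m M x i = matvec m M' x i.
Proof. intros H; unfold matvec; apply sumR_ext; intros; rewrite H; auto. Qed.
Lemma matvec_lin m M c d x z i : matvec m M (fun l => c * x l + d * z l) i = c * matvec m M x i + d * matvec m M z i.
Proof. unfold matvec. rewrite <- !sumR_scal, <- sumR_plus. apply sumR_ext; intros; ring. Qed.
Lemma matvec_scal m M c x i : matvec m M (fun l => c * x l) i = c * matvec m M x i.
Proof. unfold matvec. rewrite <- !sumR_scal. apply sumR_ext; intros; ring. Qed.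
Lemma matvec_sum m M n (c : nat -> R) (v : nat -> Vec) i :
  matvec m M (fun l => sumR n (fun j => c j * v j l)) i = sumR n (fun j => c j * matvec m M (v j) i).
Proof. unfold matvec.
 rewrite (sumR_ext m _ (fun l => sumR n (fun j => M i l * (c j * v j l)))) by (intros; rewrite <- sumR_scal; reflexivity).
 rewrite sumR_swap. apply sumR_ext; intros. rewrite <- sumR_scal. apply sumR_ext; intros; ring. Qed.
Lemma matvec_compose m M B x i : matvec m M (matvec m B x) i = matvec m (matmul m M B) x i.
Proof. unfold matvec, matmul.
 rewrite (sumR_ext m _ (fun l => sumR m (fun j => M i l * B l j * x j))) by (intros; rewrite <- sumR_scal; apply sumR_ext; intros; ring).
 rewrite sumR_swap. apply sumR_ext; intros.
 rewrite <- (Rmult_comm (x j)), <- sumR_scal. apply sumR_ext; intros; ring. Qed.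
Lemma matvec_Ta m A a x i : (i<m)%nat -> matvec m (Ta m A a) x i = matvec m (Tmat m A) x i + a * x i.
Proof. intros H. unfold matvec, Ta. rewrite <- (sumR_idM m i x H), <- sumR_scal, <- sumR_plus.
 apply sumR_ext; intros; ring. Qed.

Definition dot (m : nat) (x z : Vec) : R := sumR m (fun i => x i * z i).
Lemma dot_ext m x x' z z' : (forall i, (i<m)%nat -> x i = x' i) -> (forall i, (i<m)%nat -> z i = z' i) -> dot m x z = dot m x' z'.
Proof. intros H1 H2; unfold dot; apply sumR_ext; intros; rewrite H1, H2; auto. Qed.
Lemma dot_comm m x z : dot m x z = dot m z x.
Proof. unfold dot; apply sumR_ext; intros; ring. Qed.
Lemma dot_transp m A z x : dot m (matvec m (transp A) z) x = dot m z (matvec m A x).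
Proof. unfold dot, matvec, transp.
 rewrite (sumR_ext m _ (fun i => sumR m (fun j => A j i * z j * x i))) by (intros; rewrite Rmult_comm, <- sumR_scal; apply sumR_ext; intros; ring).
 rewrite sumR_swap. apply sumR_ext; intros. rewrite <- sumR_scal. apply sumR_ext; intros; ring. Qed.
Lemma matvec_T m A x i : matvec m (Tmat m A) x i = matvec m (transp A) (matvec m A x) i.
Proof. unfold Tmat. rewrite matvec_compose. reflexivity. Qed.
Lemma dotT_A m A x z : dot m (matvec m (Tmat m A) x) z = dot m (matvec m A x) (matvec m A z).
Proof. rewrite (dot_ext m _ (matvec m (transp A) (matvec m A x)) z z) by (intros; try apply matvec_T; auto).
 apply dot_transp. Qed.
Lemma dotT_sym m A x z : dot m (matvec m (Tmat m A) x) z = dot m x (matvec m (Tmat m A) z).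
Proof. rewrite dotT_A, (dot_comm m x), dotT_A. apply dot_comm. Qed.
Lemma dot_sq_nonneg m x : 0 <= dot m x x.
Proof. apply sumR_nonneg; intros; nra. Qed.
Lemma dotT_pos m A x : 0 <= dot m (matvec m (Tmat m A) x) x.
Proof. rewrite dotT_A; apply dot_sq_nonneg. Qed.

Lemma dot_cross m w v : 2 * dot m w v <= dot m w w + dot m v v.
Proof. unfold dot. rewrite <- sumR_scal, <- sumR_plus. apply sumR_le; intros j _; pose proof (Rle_0_sqr (w j - v j)); unfold Rsqr in *; nra. Qed.

Lemma contraction m A a v w : 0 < a ->
  (forall i, (i<m)%nat -> matvec m (Tmat m A) v i + a * v i = a * w i) ->
  dot m v v <= dot m w w.
Proof. intros Ha H.
 assert (E : dot m (matvec m (Tmat m A) v) v + a * dot m v v = a * dot m w v).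
 { unfold dot. rewrite <- !sumR_scal, <- sumR_plus. apply sumR_ext; intros j Hj.
   rewrite <- (Rmult_assoc a (w j)), <- (H j Hj). ring. }
 pose proof (dotT_pos m A v). pose proof (dot_cross m w v).
 assert (dot m v v <= dot m w v). { apply Rmult_le_reg_l with a; lra. }
 lra. Qed.

Lemma dot_zero_r m x z : (forall i, (i<m)%nat -> z i = 0) -> dot m x z = 0.
Proof. intros H; unfold dot; apply sumR_0; intros; rewrite H; auto; ring. Qed.

Lemma y_perp m A f y : min_norm_solution m A f y ->
  forall v, (forall i, (i<m)%nat -> matvec m (Tmat m A) v i = 0) -> dot m y v = 0.
Proof. intros [Hy Hmin] v Hv.
 assert (HAv : forall i, (i<m)%nat -> matvec m A v i = 0).
 { apply sumR_sq_zero. change (dot m (matvec m A v) (matvec m A v) = 0).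
   rewrite <- dotT_A. rewrite dot_comm. apply dot_zero_r; auto. }
 set (D := dot m y v). set (Sv := dot m v v). set (Sy := dot m y y).
 assert (Key : forall t, 0 <= 2 * t * D + t * t * Sv).
 { intros t. set (z := fun l => 1 * y l + t * v l).
   assert (Hz : veq m (matvec m A z) f).
   { intros i Hi. unfold z. rewrite matvec_lin, HAv, Hy by auto. ring. }
   specialize (Hmin z Hz). unfold norm in Hmin.
   apply sqrt_le_0 in Hmin; [| apply dot_sq_nonneg | apply dot_sq_nonneg].
   change (Sy <= dot m z z) in Hmin.
   assert (dot m z z = Sy + 2 * t * D + t * t * Sv).
   { unfold dot, Sy, D, Sv, z. transitivity (sumR m (fun l => (y l * y l + (2*t) * (y l * v l)) + (t*t) * (v l * v l))).
     - apply sumR_ext; intros; ring.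
     - rewrite !sumR_plus, !sumR_scal. unfold dot; ring. }
   lra. }
 assert (0 <= Sv) by apply dot_sq_nonneg.
 specialize (Key (- D / (Sv + 1))).
 assert (H1 : 0 <= (2 * (- D / (Sv + 1)) * D + (- D / (Sv + 1)) * (- D / (Sv + 1)) * Sv) * ((Sv+1)*(Sv+1))).
 { apply Rmult_le_pos; nra. }
 replace ((2 * (- D / (Sv + 1)) * D + (- D / (Sv + 1)) * (- D / (Sv + 1)) * Sv) * ((Sv+1)*(Sv+1)))
   with (- D * D * (Sv + 2)) in H1 by (field; lra).
 nra. Qed.

Lemma dep : forall k m (M : nat -> nat -> R), (m < k)%nat ->
  exists c : nat -> R, (exists j, (j<k)%nat /\ c j <> 0) /\
    forall i, (i<m)%nat -> sumR k (fun j => M i j * c j) = 0.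
Proof. induction k as [|k' IH]; intros m M Hmk; [lia|].
 destruct (classic (exists i0, (i0<m)%nat /\ M i0 k' <> 0)) as [[i0 [Hi0 Hp]] | Hno].
 - destruct m as [|m']; [lia|]. set (p := M i0 k') in *.
   set (M' := fun i j => let r := if Nat.eqb i i0 then m' else i in M r j - M r k' * M i0 j / p).
   destruct (IH m' M') as [c' [[j1 [Hj1 Hc1]] Hsol]]; [lia|].
   set (S0 := sumR k' (fun j => M i0 j * c' j)).
   set (t := - S0 / p).
   exists (fun j => if Nat.eqb j k' then t else c' j). split.
   + exists j1. split; [lia|]. destruct (Nat.eqb_spec j1 k'); [lia|auto].
   + intros i Hi. simpl. destruct (Nat.eqb_spec k' k'); [|lia].
     rewrite (sumR_ext k' _ (fun j => M i j * c' j)) by (intros j Hj; destruct (Nat.eqb_spec j k'); [lia|auto]).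
     destruct (Nat.eq_dec i i0) as [->|Hne].
     * fold S0. unfold t. fold p. field. auto.
     * set (i' := if Nat.eqb i m' then i0 else i).
       assert (Hi' : (i' < m')%nat) by (unfold i'; destruct (Nat.eqb_spec i m'); lia).
       assert (Hr : (if Nat.eqb i' i0 then m' else i') = i).
       { unfold i'. destruct (Nat.eqb_spec i m'); destruct (Nat.eqb_spec i0 i0); try lia;
         destruct (Nat.eqb_spec i i0); lia. }
       specialize (Hsol i' Hi'). unfold M' in Hsol. cbv zeta in Hsol. rewrite Hr in Hsol.
       rewrite (sumR_ext k' _ (fun j => M i j * c' j - (M i k' / p) * (M i0 j * c' j))) in Hsol
         by (intros; unfold Rdiv; ring).
       rewrite sumR_minus, sumR_scal in Hsol. fold S0 in Hsol. unfold t.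
       unfold Rdiv in *. lra.
 - exists (fun j => if Nat.eqb j k' then 1 else 0). split.
   + exists k'. split; [lia|]. rewrite Nat.eqb_refl. lra.
   + intros i Hi. simpl. rewrite Nat.eqb_refl.
     rewrite sumR_0 by (intros j Hj; destruct (Nat.eqb_spec j k'); [lia|ring]).
     destruct (Req_dec (M i k') 0) as [->|Hn]; [ring|]. exfalso; apply Hno; eauto.
Qed.

Definition pw m A j (y : Vec) : Vec := Nat.iter j (fun x => matvec m (Tmat m A) x) y.

Lemma krylov m A y
  (Hperp : forall v, (forall i, (i<m)%nat -> matvec m (Tmat m A) v i = 0) -> dot m y v = 0) :
  forall n c, (exists j, (j<n)%nat /\ c j <> 0) ->
  (forall i, (i<m)%nat -> sumR n (fun j => c j * pw m A j y i) = 0) ->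
  exists w, forall i, (i<m)%nat -> matvec m (Tmat m A) w i = y i.
Proof.
 induction n as [|n' IH]; intros c [j0 [Hj0 Hc0]] Hs; [lia|].
 assert (Hs' : forall i, (i<m)%nat ->
   c 0%nat * y i + sumR n' (fun j => c (S j) * matvec m (Tmat m A) (pw m A j y) i) = 0).
 { intros i Hi. rewrite <- (Hs i Hi), sumR_shift. reflexivity. }
 destruct (Req_dec (c 0%nat) 0) as [H0|H0].
 - set (u := fun l => sumR n' (fun j => c (S j) * pw m A j y l)).
   assert (Hu : forall i, (i<m)%nat -> matvec m (Tmat m A) u i = 0).
   { intros i Hi. unfold u. rewrite matvec_sum. specialize (Hs' i Hi). rewrite H0, Rmult_0_l, Rplus_0_l in Hs'. exact Hs'. }
   assert (Hpw : forall v, (forall i, (i<m)%nat -> matvec m (Tmat m A) v i = 0) ->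
       forall j, dot m (pw m A j y) v = 0).
   { intros v Hv j. destruct j as [|j]. - apply Hperp; auto.
     - change (dot m (matvec m (Tmat m A) (pw m A j y)) v = 0). rewrite dotT_sym.
       apply dot_zero_r; auto. }
   assert (Huu : dot m u u = 0).
   { unfold dot at 1. unfold u at 1.
     rewrite (sumR_ext m _ (fun l => sumR n' (fun j => c (S j) * (pw m A j y l * u l))))
       by (intros; rewrite Rmult_comm, <- sumR_scal; apply sumR_ext; intros; ring).
     rewrite sumR_swap. apply sumR_0. intros j Hj. rewrite sumR_scal.
     change (c (S j) * dot m (pw m A j y) u = 0). rewrite Hpw; auto. ring. }
   apply (IH (fun j => c (S j))).
   + destruct j0 as [|j1]; [contradiction|]. exists j1; split; auto; lia.
   + intros i Hi. change (u i = 0). apply (sumR_sq_zero m u Huu i Hi).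
 - exists (fun l => (- / c 0%nat) * sumR n' (fun j => c (S j) * pw m A j y l)).
   intros i Hi. rewrite matvec_scal, matvec_sum. specialize (Hs' i Hi). rewrite (sumR_ext n' _ (fun j => c (S j) * matvec m (Tmat m A) (pw m A j y) i)) by reflexivity.
   replace (sumR n' (fun j => c (S j) * matvec m (Tmat m A) (pw m A j y) i)) with (- (c 0%nat * y i)) by lra.
   field. auto.
Qed.

Lemma range_T m A f y : min_norm_solution m A f y ->
  exists w, forall i, (i<m)%nat -> matvec m (Tmat m A) w i = y i.
Proof. intros Hmn.
 destruct (dep (S m) m (fun i j => pw m A j y i)) as [c [Hnz Hsol]]; [lia|].
 apply (krylov m A y (y_perp m A f y Hmn) (S m) c Hnz).
 intros i Hi. rewrite <- (Hsol i Hi). apply sumR_ext; intros; ring. Qed.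

Fixpoint Wseq m (Tinv : nat -> Mat) q (w : Vec) (k : nat) : Vec :=
  match k with
  | O => fun l => -1 * w l
  | S k' => fun l => q ^ (S k') * matvec m (Tinv (S k')) (Wseq m Tinv q w k') l
  end.

Theorem theorem3p1 (m : nat) (A : Mat) (f y : Vec) (q : R)
  (Tinv : nat -> Mat) (u : nat -> Vec) :
  in_range m A f ->
  min_norm_solution m A f y ->
  0 < q < 1 ->
  (* Tinv n = T_{q^n}^{-1} for n >= 1 *)
  (forall n, (1 <= n)%nat -> is_inverse m (Ta m A (q ^ n)) (Tinv n)) ->
  veq m (u 1%nat) (fun _ => 0) ->
  (forall n, (1 <= n)%nat ->
     veq m (u (S n))
       (fun i => q ^ n * matvec m (Tinv n) (u n) i
                 + matvec m (Tinv n) (matvec m (transp A) f) i)) ->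
  Un_cv (fun n => norm m (vsub (u n) y)) 0.
Proof.
 intros Hrange Hmn Hq Hinv Hu1 Hrec.
 destruct (range_T m A f y Hmn) as [w Hw].
 destruct Hmn as [Hy Hmin].
 assert (HATf : forall i, (i<m)%nat -> matvec m (transp A) f i = matvec m (Tmat m A) y i).
 { intros i Hi. rewrite matvec_T. apply matvec_ext; intros; rewrite Hy; auto. }
 assert (HTa : forall n i x, (1<=n)%nat -> (i<m)%nat ->
     matvec m (Ta m A (q^n)) (matvec m (Tinv n) x) i = x i).
 { intros n i x Hn Hi. rewrite matvec_compose, (matvec_mext m _ idM)
     by (intros j Hj; apply (Hinv n Hn i j Hi Hj)). unfold matvec; apply sumR_idM; auto. }
 assert (Hstep : forall n i, (1<=n)%nat -> (i<m)%nat ->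
    matvec m (Tmat m A) (u (S n)) i + q^n * u (S n) i = q^n * u n i + matvec m (Tmat m A) y i).
 { intros n i Hn Hi. rewrite <- matvec_Ta by auto.
   rewrite (matvec_ext m _ (u (S n)) (fun l => q^n * matvec m (Tinv n) (u n) l + 1 * matvec m (Tinv n) (matvec m (transp A) f) l))
     by (intros; rewrite Hrec; auto; ring).
   rewrite matvec_lin, !HTa by auto. rewrite HATf; auto; ring. }
 set (e := fun n => vsub (u n) y).
 assert (Herr : forall n i, (1<=n)%nat -> (i<m)%nat ->
    matvec m (Tmat m A) (e (S n)) i + q^n * e (S n) i = q^n * e n i).
 { intros n i Hn Hi. unfold e, vsub.
   rewrite (matvec_ext m _ _ (fun l => 1 * u (S n) l + (-1) * y l)) by (intros; ring).
   rewrite matvec_lin. pose proof (Hstep n i Hn Hi). lra. }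
 set (W := Wseq m Tinv q w).
 assert (Hqpos : forall k, 0 < q ^ k) by (intros; apply pow_lt; lra).
 assert (HW : forall k i, (i<m)%nat ->
    matvec m (Tmat m A) (W (S k)) i + q^(S k) * W (S k) i = q^(S k) * W k i).
 { intros k i Hi. rewrite <- matvec_Ta by auto.
   change (W (S k)) with (fun l => q ^ (S k) * matvec m (Tinv (S k)) (W k) l).
   rewrite matvec_scal, HTa by (auto; lia). reflexivity. }
 assert (HE : forall k i, (i<m)%nat -> e (S k) i = matvec m (Tmat m A) (W k) i).
 { induction k as [|k IH]; intros i Hi.
   - unfold e, vsub. rewrite Hu1 by auto. change (W 0%nat) with (fun l => -1 * w l).
     rewrite matvec_scal, Hw by auto. ring.
   - set (a := q ^ (S k)).
     set (d := fun l => 1 * e (S (S k)) l + (-1) * matvec m (Tmat m A) (W (S k)) l).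
     assert (Hd : forall i, (i<m)%nat -> matvec m (Tmat m A) d i + a * d i = a * (fun _ => 0) i).
     { intros j Hj. unfold d. rewrite matvec_lin.
       assert (H1 : matvec m (Tmat m A) (fun l => matvec m (Tmat m A) (W (S k)) l) j
                    + a * matvec m (Tmat m A) (W (S k)) j = a * matvec m (Tmat m A) (W k) j).
       { rewrite <- (matvec_scal m _ a (W k) j).
         rewrite (matvec_ext m _ (fun l => a * W k l) (fun l => 1 * matvec m (Tmat m A) (W (S k)) l + a * W (S k) l))
           by (intros l Hl; rewrite Rmult_1_l; symmetry; apply HW; auto).
         rewrite matvec_lin, Rmult_1_l. reflexivity. }
       pose proof (Herr (S k) j ltac:(lia) Hj). rewrite (IH j Hj) in H. fold a in H.
       change (matvec m (Tmat m A) (fun l => matvec m (Tmat m A) (W (S k)) l) j) with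
         (matvec m (Tmat m A) (matvec m (Tmat m A) (W (S k))) j) in H1.
       lra. }
     pose proof (contraction m A a d (fun _ => 0) (Hqpos _) Hd) as Hc.
     assert (Hz : dot m (fun _ => 0) (fun _ => 0) = 0) by (apply dot_zero_r; auto).
     pose proof (dot_sq_nonneg m d).
     assert (Hdd : dot m d d = 0) by lra.
     pose proof (sumR_sq_zero m d Hdd i Hi). unfold d in H0. lra. }
 assert (HWb : forall k, dot m (W k) (W k) <= dot m w w).
 { induction k as [|k IH].
   - right. unfold dot. apply sumR_ext; intros. change (W 0%nat) with (fun l => -1 * w l). simpl; ring.
   - eapply Rle_trans; [|exact IH]. apply (contraction m A (q^(S k))); auto. }
 assert (Hbound : forall k, dot m (e (S (S k))) (e (S (S k))) <= 4 * (q^(S k) * q^(S k)) * dot m w w).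
 { intros k. set (a := q ^ (S k)).
   apply Rle_trans with (sumR m (fun l => (a*a*2) * (W k l * W k l) + (a*a*2) * (W (S k) l * W (S k) l))).
   - apply sumR_le. intros l Hl. rewrite (HE (S k) l Hl).
     assert (matvec m (Tmat m A) (W (S k)) l = a * (W k l - W (S k) l)) by (pose proof (HW k l Hl); fold a in H; lra).
     rewrite H. pose proof (Rle_0_sqr (W k l + W (S k) l)). unfold Rsqr in H0.
     assert (0 <= a * a) by nra. nra.
   - rewrite sumR_plus, !sumR_scal. change (sumR m (fun l => W k l * W k l)) with (dot m (W k) (W k)).
     change (sumR m (fun l => W (S k) l * W (S k) l)) with (dot m (W (S k)) (W (S k))).
     pose proof (HWb k); pose proof (HWb (S k)). assert (0 <= a * a) by nra. nra. }
 intros eps Heps.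
 set (sw := sqrt (dot m w w)).
 assert (Hsw : 0 <= sw) by apply sqrt_pos.
 assert (Hsw2 : sw * sw = dot m w w) by (apply sqrt_sqrt; apply dot_sq_nonneg).
 destruct (pow_lt_1_zero q ltac:(rewrite Rabs_pos_eq; lra) (eps / (2 * sw + 1))) as [N HN].
 { apply Rdiv_lt_0_compat; lra. }
 exists (S (S N)). intros n Hn.
 destruct n as [|[|k]]; try lia.
 unfold R_dist. rewrite Rminus_0_r, Rabs_pos_eq by apply sqrt_pos.
 specialize (HN (S k) ltac:(lia)). rewrite Rabs_pos_eq in HN by (left; apply Hqpos).
 set (a := q ^ (S k)) in *. pose proof (Hqpos (S k)). fold a in H.
 change (norm m (vsub (u (S (S k))) y)) with (sqrt (dot m (e (S (S k))) (e (S (S k))))).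
 apply Rle_lt_trans with (sqrt ((2 * a * sw) * (2 * a * sw))).
 - apply sqrt_le_1_alt. pose proof (Hbound k). fold a in H0. nra.
 - rewrite sqrt_square by nra.
   assert (a * (2 * sw + 1) < eps).
   { apply Rmult_lt_compat_r with (r := 2 * sw + 1) in HN; [|lra].
     unfold Rdiv in HN. rewrite Rmult_assoc, Rinv_l, Rmult_1_r in HN by lra. lra. }
   nra.
Qed.
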